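(* Let $G$ be a finite simple graph and let $\mathcal{V}$ be a maximum-cardinality collection of pairwise edge-disjoint triangles of $G$. In the lend relation, every type-$1$ triangle $\psi^1\in\mathcal{V}$ is related to at most one $\psi\in\mathcal{V}$.
   Context: Triangles are sets of three pairwise adjacent vertices, identified with their edge sets. A triangle $t\notin\mathcal{V}$ is singly-attached to $\psi\in\mathcal{V}$ if $\psi$ is the only triangle of $\mathcal{V}$ sharing an edge with $t$; the shared edge is a base-edge and the vertex of $V(t)\setminus V(\psi)$ is its anchoring vertex. For $\psi\in\mathcal{V}$, $base(\psi)$ is the set of edges of $\psi$ that are base-edges of triangles singly-attached to $\psi$; $\psi$ has type $i$ if $|base(\psi)|=i$. A triangle $t\notin\mathcal{V}$ is doubly-attached to $\psi,\psi'\in\mathcal{V}$ if these are exactly the triangles of $\mathcal{V}$ sharing an edge with $t$. For a type-$1$ triangle $\psi^1$ with exactly one singly-attached triangle, $anchor(\psi^1)$ denotes that triangle's anchoring vertex. Lend relation: $(\psi^1,\psi)$ with $\psi^1$ of type $1$ and $\psi$ of type $1$ or $3$ is in the lend relation if exactly one triangle is singly-attached to $\psi^1$ and there exist two triangles $t_1,t_2$ both doubly-attached to $\psi^1$ and $\psi$ such that $V(t_1)\cup V(t_2)=V(\psi^1)\cup\{anchor(\psi^1)\}$ and this set induces a $K_4$. *)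

(* Defs.v *)
(* Graph: symmetric irreflexive relation e on a finType T. *)
From mathcomp Require Import all_boot.
Set Implicit Arguments. Unset Strict Implicit. Unset Printing Implicit Defensive.

Section Defs.
Variables (T : finType) (e : rel T).

Definition triangle (t : {set T}) : bool :=
  (#|t| == 3) && [forall x in t, forall y in t, (x != y) ==> e x y].

Definition share_edge (t t' : {set T}) : bool := 1 < #|t :&: t'|.

Definition edge_disjoint_collection (V : {set {set T}}) : bool :=
  [forall t in V, triangle t] &&
  [forall t in V, forall t' in V, (t != t') ==> ~~ share_edge t t'].

Definition maximum_packing (V : {set {set T}}) : Prop :=
  edge_disjoint_collection V /\
  forall W : {set {set T}}, edge_disjoint_collection W -> #|W| <= #|V|.

Definition singly_attached (V : {set {set T}}) (t psi : {set T}) : bool :=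
  [&& triangle t, t \notin V, psi \in V &
      [forall p in V, share_edge t p == (p == psi)]].

Definition doubly_attached (V : {set {set T}}) (t psi psi' : {set T}) : bool :=
  [&& triangle t, t \notin V, psi \in V, psi' \in V, psi != psi' &
      [forall p in V, share_edge t p == ((p == psi) || (p == psi'))]].

Definition base (V : {set {set T}}) (psi : {set T}) : {set {set T}} :=
  [set f : {set T} | [&& f \subset psi, #|f| == 2 &
     [exists t : {set T}, singly_attached V t psi && (t :&: psi == f)]]].

Definition has_type (V : {set {set T}}) (psi : {set T}) (i : nat) : bool :=
  #|base V psi| == i.

Definition induces_K4 (S : {set T}) : bool :=
  (#|S| == 4) && [forall x in S, forall y in S, (x != y) ==> e x y].

(* The lend relation. anchor(psi1) is the anchoring vertex (the vertex of
   t0 \ psi1) of the unique triangle t0 singly-attached to psi1. *)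
Definition lend (V : {set {set T}}) (psi1 psi : {set T}) : Prop :=
  [/\ psi1 \in V, psi \in V, has_type V psi1 1 &
      has_type V psi 1 || has_type V psi 3] /\
  exists t0 : {set T},
    (forall t, singly_attached V t psi1 <-> t = t0) /\
    exists a : T, a \in t0 :\: psi1 /\
      exists t1 t2 : {set T},
        [/\ doubly_attached V t1 psi1 psi, doubly_attached V t2 psi1 psi,
            t1 :|: t2 = a |: psi1 & induces_K4 (a |: psi1)].

End Defs.

(* Main.v *)
Require Import Defs.
From mathcomp Require Import all_boot.
From mathcomp Require Import zify.
Set Implicit Arguments. Unset Strict Implicit. Unset Printing Implicit Defensive.

Section H.
Variables (T : finType) (e : rel T).

Lemma sh2 (A B : {set T}) x y : x \in A -> y \in A -> x \in B -> y \in B ->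
  x != y -> share_edge A B.
Proof.
move=> xA yA xB yB nxy; apply/card_gt1P; exists x, y; by rewrite !inE xA yA xB yB.
Qed.

Lemma disj (V : {set {set T}}) (p q : {set T}) : edge_disjoint_collection e V ->
  p \in V -> q \in V -> p != q -> #|p :&: q| <= 1.
Proof.
case/andP=> _ /forallP H pV qV npq.
move: (H p); rewrite pV /= => /forallP /(_ q); rewrite qV npq /=.
by rewrite /share_edge -leqNgt.
Qed.

Lemma key (V : {set {set T}}) (t psi1 psi psi' : {set T}) (a u : T) :
  doubly_attached e V t psi1 psi -> a \in t -> u \in t -> a != u ->
  a \in psi' -> u \in psi' -> psi' \in V -> psi' != psi1 -> psi' = psi.
Proof.
case/and5P=> _ _ _ _ /andP[_ /forallP H] hat hut nau ap up p'V np.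
move: (H psi'); rewrite p'V /= (sh2 hat hut ap up nau) eq_sym (negbTE np) /=.
by move/eqP/eqP.
Qed.

Lemma has_a (V : {set {set T}}) (t psi1 psi : {set T}) (a : T) :
  doubly_attached e V t psi1 psi -> psi1 \in V -> #|psi1| = 3 ->
  t \subset a |: psi1 -> a \in t.
Proof.
case/and5P=> /andP[/eqP ct _] tV _ _ _ p1V c1 sub.
apply/negPn/negP=> an.
have sub2 : t \subset psi1.
  apply/subsetP=> x xt; move/subsetP: sub => /(_ x xt); rewrite !inE.
  case/orP=> // /eqP xa; by rewrite -xa xt in an.
have : t == psi1 by rewrite eqEcard sub2 ct c1.
by move/eqP=> E; rewrite E p1V in tV.
Qed.

Lemma psi_has (V : {set {set T}}) (t psi1 psi : {set T}) (a : T) :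
  edge_disjoint_collection e V ->
  doubly_attached e V t psi1 psi -> t \subset a |: psi1 ->
  a \in psi /\ exists u, u \in psi1 /\ u \in psi.
Proof.
move=> hV dt sub.
case/and5P: dt=> _ _ p1V pV /andP[np /forallP H].
move: (H psi); rewrite pV eqxx orbT /= => /eqP.
case/card_gt1P=> x [y [xi yi nxy]].
move: xi yi; rewrite !inE => /andP[xt xp] /andP[yt yp].
have hd : #|psi :&: psi1| <= 1 by apply: (disj hV pV p1V); by rewrite eq_sym.
move/subsetP: sub => sub.
move: (sub x xt) (sub y yt); rewrite !inE.
case/orP=> [/eqP xa|xp1]; case/orP=> [/eqP ya|yp1].
- by rewrite xa ya eqxx in nxy.
- split; first by rewrite -xa. by exists y.
- split; first by rewrite -ya. by exists x.
- exfalso; move: hd; rewrite leqNgt => /negP; apply; apply/card_gt1P.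
  by exists x, y; rewrite !inE xp xp1 yp yp1.
Qed.

End H.

Theorem lemma18 (T : finType) (e : rel T) (e_sym : symmetric e)
  (e_irr : irreflexive e) (V : {set {set T}}) (hV : maximum_packing e V)
  (psi1 : {set T}) (h1 : psi1 \in V) (htype : has_type e V psi1 1)
  (psi psi' : {set T}) :
  lend e V psi1 psi -> lend e V psi1 psi' -> psi = psi'.
Proof.
case: hV => hD _.
have c1 : #|psi1| = 3.
  by case/andP: (hD) => /forallP /(_ psi1); rewrite h1 /= => /andP[/eqP].
case=> _ [t0 [Ht0 [a [ha [t1 [t2 [d1 d2 U _]]]]]]].
case=> _ [t0' [Ht0' [a' [ha' [t1' [t2' [d1' _ U' _]]]]]]].
have E0 : t0' = t0 by apply/Ht0/Ht0'.
subst t0'.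
have saa : singly_attached e V t0 psi1 by apply/Ht0.
case/and4P: saa => /andP[/eqP ct0 _] _ _ /forallP /(_ psi1); rewrite h1 eqxx /= => sh.
have : #|t0 :\: psi1| <= 1.
  move: (cardsID psi1 t0); rewrite ct0 => Hc.
  rewrite /share_edge in sh. move/eqP: sh => sh.
  move: Hc sh; move: #|t0 :&: psi1| #|t0 :\: psi1| => m k; lia.
move/card_le1_eqP => /(_ a a' ha ha') Eaa; subst a'.
have anp : a \notin psi1 by move: ha; rewrite inE => /andP[].
have sub1 : t1 \subset a |: psi1 by rewrite -U subsetUl.
have sub2 : t2 \subset a |: psi1 by rewrite -U subsetUr.
have sub1' : t1' \subset a |: psi1 by rewrite -U' subsetUl.
have at1 := has_a d1 h1 c1 sub1.
have at2 := has_a d2 h1 c1 sub2.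
have [ap' [u [up1 up']]] := psi_has hD d1' sub1'.
have np' : psi' != psi1 by case/and5P: d1' => _ _ _ _ /andP[]; rewrite eq_sym.
have p'V : psi' \in V by case/and5P: d1'.
have nau : a != u by apply/eqP=> E; rewrite E up1 in anp.
have : u \in t1 :|: t2 by rewrite U !inE up1 orbT.
rewrite inE => /orP[ut|ut].
- by apply/esym/(key d1 at1 ut nau ap' up' p'V np').
- by apply/esym/(key d2 at2 ut nau ap' up' p'V np').
Qed.
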